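(* If $\phi\in C(\mathbb{Z}_p,\mathbb{C}_p)$ and $y\in\mathbb{Z}_p$, then in $\mathbb{C}_p[[t]]$ $$(1-t)^yA(\phi)=A(S^y(\phi))\quad\text{and}\quad(1-t)^yP(\phi)=P(S^y(\phi)).$$
   Context: Fix a prime $p$. $\mathbb{C}_p$ denotes the completion of an algebraic closure of $\mathbb{Q}_p$, with absolute value $|\cdot|$ normalized by $|p|=1/p$. $C(\mathbb{Z}_p,\mathbb{C}_p)$ is the $\mathbb{C}_p$-Banach space of continuous functions $\mathbb{Z}_p\to\mathbb{C}_p$ with the sup-norm $\|\cdot\|$. For $n\in\mathbb{Z}_{\ge0}$ and $x\in\mathbb{Z}_p$, $\binom{x}{n}=x(x-1)\cdots(x-n+1)/n!$. For $\phi\in C(\mathbb{Z}_p,\mathbb{C}_p)$ let $(\nabla\phi)(x)=\phi(x+1)-\phi(x)$; every such $\phi$ has the Mahler expansion $\phi(x)=\sum_{n\ge0}(\nabla^n\phi)(0)\binom{x}{n}$. Define $P(\phi)=\sum_{n\ge0}(\nabla^n\phi)(0)\,t^n/n!$ and $A(\phi)=\sum_{n\ge0}\phi(n)\,t^n/n!=e^{t}P(\phi)$ in $\mathbb{C}_p[[t]]$. For $y\in\mathbb{Z}_p$ define $S^y(\phi)\in C(\mathbb{Z}_p,\mathbb{C}_p)$ by $S^y(\phi)(x)=\sum_{k\ge0}(-1)^k k!\binom yk\binom xk\phi(x-k)$. For $y\in\mathbb{Z}_p$, $(1-t)^y:=\sum_{k\ge0}(-1)^k\binom yk t^k\in\mathbb{C}_p[[t]]$.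 *)

(* Defs.v *)
From HB Require Import structures.
From mathcomp Require Import all_boot all_order all_algebra.
From mathcomp Require Import boolp classical_sets reals.
Set Implicit Arguments. Unset Strict Implicit. Unset Printing Implicit Defensive.
Import Order.TTheory GRing.Theory Num.Theory.
Local Open Scope ring_scope.

Section Padic.
Variables (R : realType) (K : closedFieldType) (abs : K -> R).

(* Axioms characterizing (K, abs) as C_p : an algebraically closed field
   (closedFieldType) of characteristic 0 with a non-archimedean absolute value
   normalised by |p| = 1/p, complete, in which the algebraic closure of Q is
   dense (so K is the completion of an algebraic closure of Q_p). *)
Definition abs_cauchy (u : nat -> K) : Prop :=
  forall e : R, 0 < e -> exists N : nat, forall m n : nat,
    (N <= m)%N -> (N <= n)%N -> abs (u m - u n) < e.

Definition abs_lim (u : nat -> K) (l : K) : Prop :=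
  forall e : R, 0 < e -> exists N : nat, forall n : nat,
    (N <= n)%N -> abs (u n - l) < e.

Definition is_Cp (p : nat) : Prop :=
     prime p
  /\ [pchar K] =i pred0
  /\ (forall x : K, abs x = 0 <-> x = 0)
  /\ (forall x y : K, abs (x * y) = abs x * abs y)
  /\ (forall x y : K, abs (x + y) <= Num.max (abs x) (abs y))
  /\ abs (p%:R) = (p%:R)^-1
  /\ (forall u, abs_cauchy u -> exists l, abs_lim u l)
  /\ (forall (x : K) (e : R), 0 < e -> exists z : K,
          (exists q : {poly rat}, q != 0 /\ root (map_poly ratr q) z)
          /\ abs (x - z) < e).

Definition in_Zp (x : K) : Prop :=
  forall e : R, 0 < e -> exists n : int, abs (x - n%:~R) < e.

(* phi : K -> K restricted to Z_p is continuous (values off Z_p irrelevant). *)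
Definition cont_Zp (phi : K -> K) : Prop :=
  forall x, in_Zp x -> forall e : R, 0 < e -> exists2 d : R, 0 < d &
    forall x', in_Zp x' -> abs (x' - x) < d -> abs (phi x' - phi x) < e.

Definition binom (x : K) (n : nat) : K :=
  (\prod_(i < n) (x - i%:R)) / (n`!)%:R.

(* sum of a convergent series (partial sums \sum_(i < n)); 0 if divergent *)
Definition series_sum (a : nat -> K) : K :=
  xget 0 (fun s => abs_lim (fun n => \sum_(i < n) a i) s).

Definition Sy (y : K) (phi : K -> K) : K -> K := fun x =>
  series_sum (fun k => (-1) ^+ k * (k`!)%:R * binom y k * binom x k
                        * phi (x - k%:R)).

Definition fps := nat -> K.
Definition fps_mul (f g : fps) : fps :=
  fun n => \sum_(i < n.+1) f i * g (n - i)%N.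

Definition one_minus_t_pow (y : K) : fps := fun k => (-1) ^+ k * binom y k.

Definition nabla (phi : K -> K) : K -> K := fun x => phi (x + 1) - phi x.

Definition Aser (phi : K -> K) : fps := fun n => phi n%:R / (n`!)%:R.
Definition Pser (phi : K -> K) : fps := fun n => iter n nabla phi 0 / (n`!)%:R.

End Padic.

(* Main.v *)
Require Import Defs.
From HB Require Import structures.
From mathcomp Require Import all_boot all_order all_algebra.
From mathcomp Require Import boolp classical_sets reals.
From mathcomp Require Import ring.
Set Implicit Arguments. Unset Strict Implicit. Unset Printing Implicit Defensive.
Import Order.TTheory GRing.Theory Num.Theory.
Local Open Scope ring_scope.

Lemma abs_ge0 (p : nat) (R : realType) (K : closedFieldType) (abs : K -> R)
  (HCp : is_Cp abs p) (x : K) : 0 <= abs x.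
Proof.
case: HCp => _ [_ [_ [Hmul _]]].
have : size ('X^2 - x%:P : {poly K}) != 1%N by rewrite size_XnsubC.
case/closed_rootP => w; rewrite /root !hornerE.
rewrite subr_eq0 => /eqP <-.
by rewrite expr2 Hmul -expr2 sqr_ge0.
Qed.

Lemma series_sum_fin (p : nat) (R : realType) (K : closedFieldType) (abs : K -> R)
  (HCp : is_Cp abs p) (a : nat -> K) N :
  (forall k, (N <= k)%N -> a k = 0) -> series_sum abs a = \sum_(i < N) a i.
Proof.
move=> Ha.
have Hps : forall n, (N <= n)%N -> \sum_(i < n) a i = \sum_(i < N) a i.
  elim=> [|n IH]; first by rewrite leqn0 => /eqP ->.
  rewrite leq_eqVlt => /orP [/eqP -> //|Hn].
  by rewrite big_ord_recr /= Ha // addr0 IH.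
have Habs0 : abs 0 = 0 by case: HCp => _ [_ [H _]]; apply/H.
apply: xget_unique.
  move=> e He; exists N => n Hn; by rewrite Hps // subrr Habs0.
move=> z Hz; apply/eqP; rewrite eq_sym -subr_eq0; apply/eqP.
have [_ [_ [H _]]] := HCp; apply/H.
have H0 := abs_ge0 HCp (\sum_(i < N) a i - z).
apply/eqP; rewrite eq_le H0 andbT; apply/negPn/negP; rewrite -ltNge => Hlt.
have [M HM] := Hz _ Hlt.
have := HM (maxn N M) (leq_maxr _ _).
by rewrite Hps ?leq_maxl // ltxx.
Qed.

Lemma natf_neq0 (p : nat) (R : realType) (K : closedFieldType) (abs : K -> R)
  (HCp : is_Cp abs p) n : (n%:R : K) != 0 = (n != 0)%N.
Proof.
case: HCp => _ [Hc _].
by have /pcharf0P -> := Hc.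
Qed.

Lemma prod_nat (K : closedFieldType) (n k : nat) :
  \prod_(i < k) ((n%:R : K) - i%:R) = (n ^_ k)%:R.
Proof.
elim: k => [|k IH]; first by rewrite big_ord0 ffactn0.
rewrite big_ord_recr /= IH ffactnSr natrM.
case: (leqP k n) => Hk; first by rewrite natrB.
by rewrite ffact_small // mul0r mul0r.
Qed.

Lemma binom_nat (p : nat) (R : realType) (K : closedFieldType) (abs : K -> R)
  (HCp : is_Cp abs p) n k : binom (n%:R : K) k = ('C(n, k))%:R.
Proof.
rewrite /binom prod_nat -bin_ffact natrM mulfK //.
by rewrite (natf_neq0 HCp) -lt0n fact_gt0.
Qed.

Lemma Sy_nat (p : nat) (R : realType) (K : closedFieldType) (abs : K -> R)
  (HCp : is_Cp abs p) (y : K) (phi : K -> K) n :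
  Sy abs y phi (n%:R) = \sum_(k < n.+1) (-1) ^+ k * (k`!)%:R * binom y k
      * ('C(n, k))%:R * phi ((n - k)%N%:R).
Proof.
rewrite /Sy (series_sum_fin HCp (N := n.+1)).
  by apply: eq_bigr => k _; rewrite (binom_nat HCp) natrB // -ltnS.
by move=> k Hk; rewrite (binom_nat HCp) bin_small // mulr0 mul0r.
Qed.

Lemma partA (p : nat) (R : realType) (K : closedFieldType) (abs : K -> R)
  (HCp : is_Cp abs p) (y : K) (phi : K -> K) :
  fps_mul (one_minus_t_pow y) (Aser phi) = Aser (Sy abs y phi).
Proof.
apply: funext => n; rewrite /Aser (Sy_nat HCp) /fps_mul mulr_suml.
apply: eq_bigr => [[k Hk]] _ /=; rewrite /one_minus_t_pow.
have Hkn : (k <= n)%N by rewrite -ltnS.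
have Hf : ((n`!)%:R : K) = ('C(n, k))%:R * ((k`!)%:R * ((n - k)`!)%:R).
  by rewrite -!natrM bin_fact.
have H1 : ((k`!)%:R : K) != 0 by rewrite (natf_neq0 HCp) -lt0n fact_gt0.
have H2 : (((n - k)`!)%:R : K) != 0 by rewrite (natf_neq0 HCp) -lt0n fact_gt0.
have H3 : (('C(n, k))%:R : K) != 0 by rewrite (natf_neq0 HCp) -lt0n bin_gt0.
rewrite Hf; field.
by rewrite H1 H2 H3.
Qed.
Lemma iter_nabla (K : closedFieldType) (f : K -> K) n x :
  iter n (@nabla K) f x =
  \sum_(j < n.+1) (-1) ^+ (n - j) * ('C(n, j))%:R * f (x + j%:R).
Proof.
elim: n x => [|n IH] x.
  by rewrite big_ord1 /= expr0 mul1r mul1r addr0.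
rewrite iterS /nabla IH IH.
rewrite [in RHS]big_ord_recl /= subn0 bin0 mulr1 addr0.
under [in RHS]eq_bigr => i _ do
  rewrite /bump /= add1n subSS binS natrD mulrDr mulrDl.
rewrite big_split /=.
set s := fun m => (-1) ^+ m : K.
have HC1 : \sum_(i < n.+1) s (n - i)%N * ('C(n, i.+1))%:R * f (x + (i.+1)%:R)
   = \sum_(i < n) s (n - i)%N * ('C(n, i.+1))%:R * f (x + (i.+1)%:R).
  by rewrite big_ord_recr /= bin_small // mulr0 mul0r addr0.
have HC2 : \sum_(i < n.+1) s (n - i)%N * ('C(n, i))%:R * f (x + (i.+1)%:R)
   = \sum_(j < n.+1) s (n - j)%N * ('C(n, j))%:R * f (x + 1 + j%:R).
  by apply: eq_bigr => i _; rewrite -addrA -natr1 (addrC 1).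
have HB : \sum_(j < n.+1) s (n - j)%N * ('C(n, j))%:R * f (x + j%:R)
   = s n * f x - \sum_(i < n) s (n - i)%N * ('C(n, i.+1))%:R * f (x + (i.+1)%:R).
  rewrite big_ord_recl /= subn0 bin0 mulr1 addr0; congr (_ + _).
  rewrite -sumrN; apply: eq_bigr => i _.
  by rewrite /bump /= add1n /s -(subnSK (ltn_ord i)) exprS mulN1r !mulNr opprK.
rewrite -/(s _) HC1 HC2 HB /s exprS.
ring.
Qed.
Lemma fps_mul_poly (K : closedFieldType) (a b : fps K) (P Q : {poly K}) n :
  (forall i, (i <= n)%N -> a i = P`_i) -> (forall i, (i <= n)%N -> b i = Q`_i) ->
  fps_mul a b n = (P * Q)`_n.
Proof.
move=> Ha Hb; rewrite coefM /fps_mul; apply: eq_bigr => i _.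
rewrite Ha ?Hb //; first exact: leq_subr.
by rewrite -ltnS.
Qed.

Definition Tr (K : closedFieldType) (f : fps K) n : {poly K} := \poly_(i < n.+1) f i.

Lemma Tr_coef (K : closedFieldType) (f : fps K) n i : (i <= n)%N -> f i = (Tr f n)`_i.
Proof. by move=> H; rewrite coef_poly ltnS H. Qed.

Lemma fps_mulA (K : closedFieldType) (f g h : fps K) :
  fps_mul (fps_mul f g) h = fps_mul f (fps_mul g h).
Proof.
apply: funext => n.
rewrite (@fps_mul_poly _ _ _ (Tr f n * Tr g n) (Tr h n)); last first.
- by move=> i Hi; apply: Tr_coef.
- move=> i Hi; apply: fps_mul_poly => j Hj; apply: Tr_coef; exact: leq_trans Hj Hi.
rewrite (@fps_mul_poly _ _ _ (Tr f n) (Tr g n * Tr h n)) ?mulrA //.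
- by move=> i Hi; apply: Tr_coef.
- move=> i Hi; apply: fps_mul_poly => j Hj; apply: Tr_coef; exact: leq_trans Hj Hi.
Qed.

Lemma PserE (p : nat) (R : realType) (K : closedFieldType) (abs : K -> R)
  (HCp : is_Cp abs p) (f : K -> K) :
  Pser f = fps_mul (Aser f) (fun n => (-1) ^+ n / (n`!)%:R).
Proof.
apply: funext => n; rewrite /Pser iter_nabla /fps_mul mulr_suml.
apply: eq_bigr => [[k Hk]] _ /=; rewrite /Aser add0r.
have Hkn : (k <= n)%N by rewrite -ltnS.
have Hf : ((n`!)%:R : K) = ('C(n, k))%:R * ((k`!)%:R * ((n - k)`!)%:R).
  by rewrite -!natrM bin_fact.
have H1 : ((k`!)%:R : K) != 0 by rewrite (natf_neq0 HCp) -lt0n fact_gt0.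
have H2 : (((n - k)`!)%:R : K) != 0 by rewrite (natf_neq0 HCp) -lt0n fact_gt0.
have H3 : (('C(n, k))%:R : K) != 0 by rewrite (natf_neq0 HCp) -lt0n bin_gt0.
rewrite Hf; field.
by rewrite H1 H2 H3.
Qed.

Theorem proposition6p2 (p : nat) (R : realType) (K : closedFieldType)
    (abs : K -> R) (HCp : is_Cp abs p)
    (phi : K -> K) (Hphi : cont_Zp abs phi) (y : K) (Hy : in_Zp abs y) :
  fps_mul (one_minus_t_pow y) (Aser phi) = Aser (Sy abs y phi) /\
  fps_mul (one_minus_t_pow y) (Pser phi) = Pser (Sy abs y phi).
Proof.
split; first exact: (partA HCp).
by rewrite !(PserE HCp) -fps_mulA (partA HCp).
Qed.
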